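(* Let $T:\mathrm{PSym}(3)\to\mathrm{Sym}(3)$ be continuous and isotropic (i.e. $T(Q^TUQ)=Q^TT(U)Q$ for all $Q\in\mathrm O(3)$, $U\in\mathrm{PSym}(3)$), such that $T(U)=0$ holds if and only if $U=\mathbb 1$, and such that $T(U_1U_2)=T(U_1)+T(U_2)$ for all commuting $U_1,U_2\in\mathrm{PSym}(3)$. Then there exist constants $G,\Lambda\in\mathbb R$ with $G\neq0$ and $3\Lambda+2G\neq0$ such that $$T(U)=2G\,\log U+\Lambda\,\mathrm{tr}(\log U)\,\mathbb 1\quad\text{for all }U\in\mathrm{PSym}(3),$$ equivalently constants $G,K\in\mathbb R\setminus\{0\}$ with $T(U)=2G\,\mathrm{dev}_3\log U+K\,\mathrm{tr}(\log U)\,\mathbb 1$.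
   Context: $\mathrm{Sym}(3)$: real symmetric $3\times3$ matrices; $\mathrm{PSym}(3)$: symmetric positive definite ones; $\mathbb 1$: identity; $\mathrm O(3)$: orthogonal group; $\log$: principal matrix logarithm $\mathrm{PSym}(3)\to\mathrm{Sym}(3)$; $\mathrm{dev}_3X=X-\tfrac13\mathrm{tr}(X)\mathbb 1$. *)

(* Defs.v *)
From Stdlib Require Import Reals ClassicalEpsilon.
Open Scope R_scope.

Inductive I3 : Type := i0 | i1 | i2.

Definition I3_eqb (i j : I3) : bool :=
  match i, j with
  | i0, i0 | i1, i1 | i2, i2 => true
  | _, _ => false
  end.

Definition Mat3 : Type := I3 -> I3 -> R.

Definition sum3 (f : I3 -> R) : R := f i0 + f i1 + f i2.

Definition mzero : Mat3 := fun _ _ => 0.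
Definition mid : Mat3 := fun i j => if I3_eqb i j then 1 else 0.
Definition madd (A B : Mat3) : Mat3 := fun i j => A i j + B i j.
Definition mscal (c : R) (A : Mat3) : Mat3 := fun i j => c * A i j.
Definition mmul (A B : Mat3) : Mat3 := fun i j => sum3 (fun k => A i k * B k j).
Definition mtr (A : Mat3) : Mat3 := fun i j => A j i.
Definition trace (A : Mat3) : R := A i0 i0 + A i1 i1 + A i2 i2.
Definition diag3 (d : I3 -> R) : Mat3 := fun i j => if I3_eqb i j then d i else 0.

(* distance: sum of absolute entrywise differences (all norms equivalent) *)
Definition mdist (A B : Mat3) : R := sum3 (fun i => sum3 (fun j => Rabs (A i j - B i j))).

Definition Sym3 (A : Mat3) : Prop := forall i j, A i j = A j i.
Definition PSym3 (A : Mat3) : Prop :=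
  Sym3 A /\
  forall x : I3 -> R, (exists i, x i <> 0) ->
    0 < sum3 (fun i => sum3 (fun j => x i * A i j * x j)).
Definition Orth3 (Q : Mat3) : Prop := mmul (mtr Q) Q = mid.

Definition dev3 (X : Mat3) : Mat3 := madd X (mscal (- (trace X / 3)) mid).

Definition is_logm (U L : Mat3) : Prop :=
  exists (Q : Mat3) (d : I3 -> R),
    Orth3 Q /\ (forall i, 0 < d i) /\
    U = mmul (mtr Q) (mmul (diag3 d) Q) /\
    L = mmul (mtr Q) (mmul (diag3 (fun i => ln (d i))) Q).

Definition logm (U : Mat3) : Mat3 :=
  epsilon (inhabits mzero) (is_logm U).

Definition cont_on_PSym (T : Mat3 -> Mat3) : Prop :=
  forall U, PSym3 U -> forall eps, 0 < eps ->
    exists delta, 0 < delta /\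
      forall V, PSym3 V -> mdist V U < delta -> mdist (T V) (T U) < eps.

(* Main.v *)
Require Import Defs.
From Stdlib Require Import Reals Lra Psatz Nsatz ZArith FunctionalExtensionality Classical ClassicalEpsilon.
Open Scope R_scope.

Lemma mat_ext (A B : Mat3) : (forall i j, A i j = B i j) -> A = B.
Proof. intros H. apply functional_extensionality; intro i; apply functional_extensionality; intro j; apply H. Qed.

Ltac msolve := apply mat_ext; intros i j; destruct i, j;
  unfold mmul, mtr, madd, mscal, mid, diag3, sum3, mzero, dev3, trace; simpl; ring.

Lemma mmul_assoc A B C : mmul A (mmul B C) = mmul (mmul A B) C.
Proof. msolve. Qed.
Lemma mtr_mmul A B : mtr (mmul A B) = mmul (mtr B) (mtr A).
Proof. msolve. Qed.
Lemma mtr_mtr A : mtr (mtr A) = A. Proof. msolve. Qed.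
Lemma mmul_id_l A : mmul mid A = A. Proof. msolve. Qed.
Lemma mmul_id_r A : mmul A mid = A. Proof. msolve. Qed.
Lemma mtr_mid : mtr mid = mid. Proof. msolve. Qed.

Definition det3 (M : Mat3) : R :=
  M i0 i0 * (M i1 i1 * M i2 i2 - M i1 i2 * M i2 i1)
  - M i0 i1 * (M i1 i0 * M i2 i2 - M i1 i2 * M i2 i0)
  + M i0 i2 * (M i1 i0 * M i2 i1 - M i1 i1 * M i2 i0).

Lemma det3_mul A B : det3 (mmul A B) = det3 A * det3 B.
Proof. unfold det3, mmul, sum3; ring. Qed.

Definition adj3 (M : Mat3) : Mat3 := fun i j =>
  match j, i with
  | i0, i0 => M i1 i1 * M i2 i2 - M i1 i2 * M i2 i1
  | i0, i1 => - (M i1 i0 * M i2 i2 - M i1 i2 * M i2 i0)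
  | i0, i2 => M i1 i0 * M i2 i1 - M i1 i1 * M i2 i0
  | i1, i0 => - (M i0 i1 * M i2 i2 - M i0 i2 * M i2 i1)
  | i1, i1 => M i0 i0 * M i2 i2 - M i0 i2 * M i2 i0
  | i1, i2 => - (M i0 i0 * M i2 i1 - M i0 i1 * M i2 i0)
  | i2, i0 => M i0 i1 * M i1 i2 - M i0 i2 * M i1 i1
  | i2, i1 => - (M i0 i0 * M i1 i2 - M i0 i2 * M i1 i0)
  | i2, i2 => M i0 i0 * M i1 i1 - M i0 i1 * M i1 i0
  end.

Lemma adj_r M : mmul M (adj3 M) = mscal (det3 M) mid.
Proof. apply mat_ext; intros i j; destruct i, j; unfold mmul, adj3, mscal, mid, det3, sum3; simpl; ring. Qed.
Lemma adj_l M : mmul (adj3 M) M = mscal (det3 M) mid.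
Proof. apply mat_ext; intros i j; destruct i, j; unfold mmul, adj3, mscal, mid, det3, sum3; simpl; ring. Qed.

Lemma det3_mid : det3 mid = 1. Proof. unfold det3, mid; simpl; ring. Qed.

Lemma mmul_scal_l c A B : mmul (mscal c A) B = mscal c (mmul A B). Proof. msolve. Qed.
Lemma mmul_scal_r c A B : mmul A (mscal c B) = mscal c (mmul A B). Proof. msolve. Qed.
Lemma mscal_mscal a b A : mscal a (mscal b A) = mscal (a*b) A. Proof. msolve. Qed.
Lemma mscal_1 A : mscal 1 A = A. Proof. msolve. Qed.

Lemma inv_comm A B : mmul A B = mid -> mmul B A = mid.
Proof.
  intros H.
  assert (Hd : det3 A * det3 B = 1) by (rewrite <- det3_mul, H; apply det3_mid).
  assert (HA : det3 A <> 0) by (intro E; rewrite E in Hd; lra).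
  assert (HB : B = mscal (/ det3 A) (adj3 A)).
  { transitivity (mscal (/ det3 A) (mmul (mmul (adj3 A) A) B)).
    - rewrite adj_l, mmul_scal_l, mmul_id_l, mscal_mscal.
      rewrite Rinv_l by exact HA. now rewrite mscal_1.
    - now rewrite <- mmul_assoc, H, mmul_id_r. }
  rewrite HB, mmul_scal_l, adj_l, mscal_mscal, Rinv_l by exact HA. apply mscal_1.
Qed.

Section Cauchy.
Variable f : R -> R.
Hypothesis Hadd : forall x y, f (x + y) = f x + f y.
Hypothesis Hc : forall x eps, 0 < eps -> exists d, 0 < d /\ forall y, Rabs (y - x) < d -> Rabs (f y - f x) < eps.

Lemma cf0 : f 0 = 0.
Proof. assert (H := Hadd 0 0). rewrite Rplus_0_r in H. lra. Qed.

Lemma cfZ : forall z x, f (IZR z * x) = IZR z * f x.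
Proof.
  intros z x. induction z using Z.peano_ind.
  - simpl. rewrite Rmult_0_l, cf0. ring.
  - rewrite succ_IZR. replace ((IZR z + 1) * x) with (IZR z * x + x) by ring.
    rewrite Hadd, IHz. ring.
  - replace (IZR (Z.pred z)) with (IZR z - 1) by (unfold Z.pred; rewrite plus_IZR; simpl; ring).
    assert (H := Hadd ((IZR z - 1) * x) x).
    replace ((IZR z - 1) * x + x) with (IZR z * x) in H by ring.
    rewrite IHz in H. lra.
Qed.

Lemma cauchy_lin : forall x, f x = f 1 * x.
Proof.
  intros x. apply NNPP; intro Hne.
  set (g := fun y => f y - f 1 * y).
  assert (gZ : forall z y, g (IZR z * y) = IZR z * g y).
  { intros z y; unfold g. rewrite cfZ. ring. }
  assert (gx : g x <> 0) by (unfold g; lra).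
  assert (Hgc : forall eps, 0 < eps -> exists d, 0 < d /\ forall y, Rabs (y - x) < d -> Rabs (g y - g x) < eps).
  { intros eps He. destruct (Hc x (eps/2)) as [d1 [Hd1 H1]]; [lra|].
    assert (Hk : 0 < Rabs (f 1) + 1) by (pose proof (Rabs_pos (f 1)); lra).
    exists (Rmin d1 (eps / 2 / (Rabs (f 1) + 1))). split.
    { apply Rmin_glb_lt; [lra|]. apply Rdiv_lt_0_compat; lra. }
    intros y Hy. assert (Hy1 : Rabs (y - x) < d1) by (eapply Rlt_le_trans; [exact Hy| apply Rmin_l]).
    assert (Hy2 : Rabs (y - x) < eps / 2 / (Rabs (f 1) + 1)) by (eapply Rlt_le_trans; [exact Hy| apply Rmin_r]).
    specialize (H1 y Hy1).
    replace (g y - g x) with ((f y - f x) - f 1 * (y - x)) by (unfold g; ring).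
    eapply Rle_lt_trans; [apply Rabs_triang|]. rewrite Rabs_Ropp, Rabs_mult.
    assert (Rabs (f 1) * Rabs (y - x) <= eps / 2).
    { assert (Rabs (y - x) * (Rabs (f 1) + 1) < eps / 2).
      { apply Rmult_lt_reg_r with (/ (Rabs (f 1) + 1)). apply Rinv_0_lt_compat; lra.
        replace (Rabs (y - x) * (Rabs (f 1) + 1) * / (Rabs (f 1) + 1)) with (Rabs (y - x)) by (field; lra).
        exact Hy2. }
      pose proof (Rabs_pos (y - x)). nra. }
    lra. }
  destruct (Hgc (Rabs (g x))) as [d [Hd Hd2]]. { apply Rabs_pos_lt; exact gx. }
  destruct (archimed (/ d)) as [HN1 HN2].
  set (N := up (/ d)) in *.
  assert (Hid : 0 < / d) by (apply Rinv_0_lt_compat; lra).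
  assert (HNp : 0 < IZR N) by lra.
  destruct (archimed (IZR N * x)) as [Hz1 Hz2].
  set (z := up (IZR N * x)) in *.
  set (y := IZR z / IZR N).
  assert (Hy : Rabs (y - x) < d).
  { unfold y. apply Rabs_def1.
    - apply Rmult_lt_reg_l with (IZR N); [lra|].
      replace (IZR N * (IZR z / IZR N - x)) with (IZR z - IZR N * x) by (field; lra).
      assert (IZR N * d > 1).
      { apply Rmult_lt_reg_l with (/ d); [lra|].
        replace (/ d * (IZR N * d)) with (IZR N) by (field; lra). lra. }
      lra.
    - apply Rmult_lt_reg_l with (IZR N); [lra|].
      replace (IZR N * - d) with (- (IZR N * d)) by ring.
      replace (IZR N * (IZR z / IZR N - x)) with (IZR z - IZR N * x) by (field; lra).
      nra. }
  specialize (Hd2 y Hy).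
  assert (gy : g y = 0).
  { assert (H1 := gZ N y).
    replace (IZR N * y) with (IZR z * 1) in H1 by (unfold y; field; lra).
    rewrite gZ in H1.
    assert (g 1 = 0) by (unfold g; ring).
    rewrite H in H1. assert (IZR N * g y = 0) by lra.
    apply Rmult_integral in H0. destruct H0; [lra|auto]. }
  rewrite gy, Rminus_0_l, Rabs_Ropp in Hd2. lra.
Qed.
End Cauchy.

Definition mv (M:Mat3) (v:I3->R) i := sum3 (fun k => M i k * v k).
Definition nz (v : I3 -> R) := exists i, v i <> 0.
Definition cross (a b : I3->R) : I3 -> R := fun i => match i with
  | i0 => a i1*b i2 - a i2*b i1 | i1 => a i2*b i0 - a i0*b i2 | i2 => a i0*b i1 - a i1*b i0 end.
Definition ev k : I3->R := fun i => if I3_eqb k i then 1 else 0.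

Lemma cand (P : Prop) (v : I3->R) : (nz v -> P) -> (v i0 = 0 -> v i1 = 0 -> v i2 = 0 -> P) -> P.
Proof.
  intros H1 H2. destruct (classic (nz v)) as [H|H]; auto.
  apply H2; apply NNPP; intro Hn; apply H; eexists; exact Hn.
Qed.

Ltac kcase c := apply (cand _ c); [intro; exists c; split; [assumption|];
   let i := fresh in intro i; destruct i; unfold mv, sum3, cross, ev in *; simpl in *; nsatz | intros ? ? ?].

Lemma kernel M : det3 M = 0 -> exists v, nz v /\ forall i, mv M v i = 0.
Proof.
  intros Hd. unfold det3 in Hd.
  kcase (cross (M i0) (M i1)).
  kcase (cross (M i0) (M i2)).
  kcase (cross (M i1) (M i2)).
  kcase (cross (M i0) (ev i0)).
  kcase (cross (M i0) (ev i1)).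
  kcase (cross (M i1) (ev i0)).
  kcase (cross (M i1) (ev i1)).
  kcase (cross (M i2) (ev i0)).
  kcase (cross (M i2) (ev i1)).
  exists (ev i0). split. { unfold nz, ev; exists i0; simpl; apply R1_neq_R0. }
  unfold cross, ev in *; simpl in *.
  intro i; destruct i; unfold mv, sum3, ev; simpl; nsatz.
Qed.
Lemma cubic_root a2 a1 a0 : exists x, x*x*x - a2*x*x - a1*x - a0 = 0.
Proof.
  set (f := fun x => x*x*x - a2*x*x - a1*x - a0).
  assert (Hc : continuity f) by (unfold f; reg).
  set (M := 1 + Rabs a2 + Rabs a1 + Rabs a0).
  pose proof (Rabs_pos a2); pose proof (Rabs_pos a1); pose proof (Rabs_pos a0).
  assert (HM : 1 <= M) by (unfold M; lra).
  assert (HM2 : M <= M * M) by nra.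
  pose proof (Rle_abs a2); pose proof (Rle_abs a1); pose proof (Rle_abs a0).
  pose proof (Rle_abs (-a2)); pose proof (Rle_abs (-a1)); pose proof (Rle_abs (-a0)); rewrite Rabs_Ropp in *.
  assert (f M > 0).
  { unfold f. assert (a2 * M * M <= Rabs a2 * (M*M)) by nra.
    assert (a1 * M <= Rabs a1 * (M*M)) by nra.
    assert (a0 <= Rabs a0 * (M*M)) by nra.
    assert (M*M*M = M * (M*M)) by ring.
    assert (M * (M*M) - (Rabs a2 + Rabs a1 + Rabs a0) * (M*M) = M*M) by (unfold M; ring).
    nra. }
  assert (f (-M) < 0).
  { unfold f. assert (- a2 * (-M) * (-M) <= Rabs a2 * (M*M)) by nra.
    assert (- a1 * (-M) <= Rabs a1 * (M*M)) by nra.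
    assert (- a0 <= Rabs a0 * (M*M)) by nra.
    assert (M * (M*M) - (Rabs a2 + Rabs a1 + Rabs a0) * (M*M) = M*M) by (unfold M; ring).
    nra. }
  destruct (IVT f (-M) M Hc) as [x [_ Hx]]; [lra|lra|lra|].
  exists x. exact Hx.
Qed.

Definition dot (u v : I3 -> R) := sum3 (fun k => u k * v k).

Lemma nz_dot v : nz v -> 0 < dot v v.
Proof.
  intros [i Hi]. unfold dot, sum3.
  pose proof (Rle_0_sqr (v i0)); pose proof (Rle_0_sqr (v i1)); pose proof (Rle_0_sqr (v i2)).
  unfold Rsqr in *. destruct i.
  - assert (0 < v i0 * v i0) by (apply Rsqr_pos_lt; exact Hi). lra.
  - assert (0 < v i1 * v i1) by (apply Rsqr_pos_lt; exact Hi). lra.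
  - assert (0 < v i2 * v i2) by (apply Rsqr_pos_lt; exact Hi). lra.
Qed.

Lemma normalize v : nz v -> exists w, dot w w = 1 /\ exists c, c <> 0 /\ forall i, v i = c * w i.
Proof.
  intros Hv. pose proof (nz_dot v Hv) as Hp.
  set (s := sqrt (dot v v)).
  assert (Hs : 0 < s) by (apply sqrt_lt_R0; exact Hp).
  assert (Hs2 : s * s = dot v v) by (apply sqrt_sqrt; lra).
  exists (fun i => v i / s). split.
  - transitivity (dot v v / (s * s)). { unfold dot, sum3; field; lra. }
    rewrite <- Hs2. field. lra.
  - exists s. split; [lra|]. intro i. field. lra.
Qed.

Lemma eig A : exists lam v, dot v v = 1 /\ forall i, mv A v i = lam * v i.
Proof.
  destruct (cubic_root (trace A)
     (- ((A i1 i1 * A i2 i2 - A i1 i2 * A i2 i1) + (A i0 i0 * A i2 i2 - A i0 i2 * A i2 i0)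
         + (A i0 i0 * A i1 i1 - A i0 i1 * A i1 i0))) (det3 A)) as [x Hx].
  destruct (kernel (madd A (mscal (-x) mid))) as [v [Hv Hk]].
  { unfold det3, madd, mscal, mid, trace in *; simpl. lra. }
  destruct (normalize v Hv) as [w [Hw [c [Hc Hcw]]]].
  exists x, w. split; [exact Hw|].
  intro i. specialize (Hk i). unfold mv, sum3, madd, mscal, mid in *.
  rewrite !Hcw in Hk.
  apply Rmult_eq_reg_l with c; [|exact Hc].
  destruct i; simpl in *; lra.
Qed.

Definition rows3 (a b c : I3->R) : Mat3 := fun i j => match i with i0 => a j | i1 => b j | i2 => c j end.
Definition OO Q := mmul Q (mtr Q) = mid /\ mmul (mtr Q) Q = mid.

Lemma orth_vec v : dot v v = 1 -> exists w, dot w w = 1 /\ dot v w = 0.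
Proof.
  intros Hv.
  assert (Hw0 : exists w0, nz w0 /\ dot v w0 = 0).
  { destruct (classic (v i1 = 0 /\ v i2 = 0)) as [[H1 H2]|H].
    - exists (ev i1). split. { unfold nz, ev; exists i1; simpl; apply R1_neq_R0. }
      unfold dot, sum3, ev; simpl. rewrite H1; ring.
    - exists (fun i => match i with i0 => 0 | i1 => v i2 | i2 => - v i1 end). split.
      + apply NNPP; intro Hn; apply H. split.
        * apply NNPP; intro Hn2; apply Hn; exists i2; simpl. intro; apply Hn2; lra.
        * apply NNPP; intro Hn2; apply Hn; exists i1; simpl. exact Hn2.
      + unfold dot, sum3; simpl; ring. }
  destruct Hw0 as [w0 [Hnz Ho]].
  destruct (normalize w0 Hnz) as [w [Hw [c [Hc Hcw]]]].
  exists w. split; [exact Hw|].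
  unfold dot, sum3 in *. rewrite !Hcw in Ho.
  apply Rmult_eq_reg_l with c; [|exact Hc]. lra.
Qed.

Lemma complete v : dot v v = 1 -> exists P, OO P /\ forall j, P i0 j = v j.
Proof.
  intros Hv. destruct (orth_vec v Hv) as [w [Hw Ho]].
  set (P := rows3 v w (cross v w)).
  assert (H1 : mmul P (mtr P) = mid).
  { unfold dot, sum3 in *. apply mat_ext; intros i j; destruct i, j;
    unfold P, mmul, mtr, rows3, mid, sum3, cross; simpl; nsatz. }
  exists P. split; [split; [exact H1| apply inv_comm; exact H1]|].
  intro j; reflexivity.
Qed.

Lemma OO_mul P R : OO P -> OO R -> OO (mmul R P).
Proof.
  intros [H1 H2] [H3 H4]. split.
  - rewrite mtr_mmul, <- mmul_assoc, (mmul_assoc P), H1, mmul_id_l, H3. reflexivity.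
  - rewrite mtr_mmul, <- mmul_assoc, (mmul_assoc (mtr R)), H4, mmul_id_l, H2. reflexivity.
Qed.

Lemma rot2 p q r : exists c s, c*c+s*s=1 /\ -c*s*p + (c*c - s*s)*q + c*s*r = 0.
Proof.
  destruct (Req_dec q 0) as [Hq|Hq].
  - exists 1, 0. split; [ring|]. rewrite Hq; ring.
  - set (D := sqrt (((p-r)/2)*((p-r)/2) + q*q)).
    assert (HD : D*D = ((p-r)/2)*((p-r)/2) + q*q).
    { apply sqrt_sqrt. pose proof (Rle_0_sqr ((p-r)/2)); pose proof (Rle_0_sqr q); unfold Rsqr in *; lra. }
    set (m := (p+r)/2 + D).
    assert (Hm : (m-p)*(m-r) = q*q) by (unfold m; nra).
    assert (Hn0 : 0 < q*q + (m-p)*(m-p)).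
    { assert (0 < q*q) by (apply Rsqr_pos_lt; exact Hq). pose proof (Rle_0_sqr (m-p)); unfold Rsqr in *; lra. }
    set (n := sqrt (q*q + (m-p)*(m-p))).
    assert (Hn : n*n = q*q + (m-p)*(m-p)) by (apply sqrt_sqrt; lra).
    assert (Hnp : 0 < n) by (apply sqrt_lt_R0; lra).
    exists (q/n), ((m-p)/n). split.
    + transitivity ((q*q + (m-p)*(m-p))/(n*n)). { field; lra. }
      rewrite <- Hn. field. lra.
    + transitivity ((q * (q*q - (m-p)*(m-r)))/(n*n)). { field; lra. }
      rewrite Hm. field. lra.
Qed.

Lemma sym_mtr A : Sym3 A -> mtr A = A.
Proof. intros H; apply mat_ext; intros i j; apply H. Qed.
Lemma mtr_sym A : mtr A = A -> Sym3 A.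
Proof. intros H i j. change (A i j = mtr A i j). rewrite H. reflexivity. Qed.

Lemma sym_conj P A : Sym3 A -> Sym3 (mmul P (mmul A (mtr P))).
Proof.
  intros H. apply mtr_sym. rewrite !mtr_mmul, mtr_mtr, sym_mtr by exact H.
  symmetry; apply mmul_assoc.
Qed.

Lemma spectral A : Sym3 A -> exists Q, OO Q /\ exists d, mmul Q (mmul A (mtr Q)) = diag3 d.
Proof.
  intros HA.
  destruct (eig A) as [lam [v [Hv Hk]]].
  destruct (complete v Hv) as [P [[HP1 HP2] HPv]].
  set (B := mmul P (mmul A (mtr P))).
  assert (HBs : Sym3 B) by (apply sym_conj; exact HA).
  assert (HB0 : forall j, B j i0 = lam * mid j i0).
  { intro j. rewrite <- HP1. unfold mv, sum3 in Hk.
    pose proof (Hk i0); pose proof (Hk i1); pose proof (Hk i2).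
    rewrite <- !HPv in *.
    destruct j; unfold B, mmul, mtr, sum3 in *; simpl in *; nsatz. }
  assert (HB01 : B i1 i0 = 0) by (rewrite HB0; unfold mid; simpl; ring).
  assert (HB02 : B i2 i0 = 0) by (rewrite HB0; unfold mid; simpl; ring).
  destruct (rot2 (B i1 i1) (B i1 i2) (B i2 i2)) as [c [s [Hcs Hr]]].
  set (R3 := fun i j => match i, j with i0,i0=>1 | i1,i1 => c | i1,i2 => s
                  | i2,i1 => -s | i2,i2 => c | _,_ => 0 end).
  assert (HR1 : mmul R3 (mtr R3) = mid).
  { apply mat_ext; intros i j; destruct i, j; unfold R3, mmul, mtr, mid, sum3; simpl; nsatz. }
  assert (HR : OO R3) by (split; [exact HR1 | apply inv_comm; exact HR1]).
  exists (mmul R3 P). split. { apply OO_mul; [split; assumption | exact HR]. }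
  exists (fun i => mmul R3 (mmul B (mtr R3)) i i).
  assert (E : mmul (mmul R3 P) (mmul A (mtr (mmul R3 P))) = mmul R3 (mmul B (mtr R3))).
  { unfold B. rewrite mtr_mmul. msolve. }
  rewrite E.
  assert (Z1 : B i0 i1 = 0) by (rewrite HBs; exact HB01).
  assert (Z2 : B i0 i2 = 0) by (rewrite HBs; exact HB02).
  assert (Z3 : B i2 i1 = B i1 i2) by (rewrite HBs; reflexivity).
  clearbody B. clear E HR HR1 HB0 HBs.
  apply mat_ext; intros i j; destruct i, j; unfold diag3; simpl; try reflexivity;
  unfold R3, mmul, mtr, sum3; simpl; rewrite ?Z1, ?Z2, ?HB01, ?HB02, ?Z3; try ring;
  (etransitivity; [|exact Hr]; ring).
Qed.

Lemma exp_cont x eps : 0 < eps -> exists d, 0 < d /\ forall y, Rabs (y - x) < d -> Rabs (exp y - exp x) < eps.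
Proof.
  intros He.
  assert (H : continuity_pt exp x) by (apply derivable_continuous_pt; apply derivable_pt_exp).
  destruct (H eps He) as [d [Hd Hd2]].
  exists d. split; [exact Hd|]. intros y Hy.
  destruct (Req_dec y x) as [E|E].
  - subst. rewrite Rminus_diag, Rabs_R0. exact He.
  - apply (Hd2 y). split; [split; [exact I| auto] | exact Hy].
Qed.

Lemma spec_PSym U : PSym3 U -> exists Q d, Orth3 Q /\ (forall i, 0 < d i) /\
   U = mmul (mtr Q) (mmul (diag3 d) Q).
Proof.
  intros [HS HP]. destruct (spectral U HS) as [Q [[HQ1 HQ2] [d Hd]]].
  exists Q, d. split; [exact HQ2|]. split.
  - intro i. replace (d i) with (diag3 d i i) by (destruct i; reflexivity). rewrite <- Hd.
    set (x := fun k => Q i k).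
    assert (Hx : exists k, x k <> 0).
    { apply NNPP; intro Hn.
      assert (forall k, x k = 0) by (intro k; apply NNPP; intro; apply Hn; eexists; eauto).
      assert (Hii : mmul Q (mtr Q) i i = 1) by (rewrite HQ1; unfold mid; destruct i; simpl; reflexivity).
      unfold mmul, mtr, sum3 in Hii. unfold x in H.
      rewrite !H in Hii. lra. }
    specialize (HP x Hx). unfold x in HP.
    replace (mmul Q (mmul U (mtr Q)) i i) with
       (sum3 (fun i1 => sum3 (fun j => Q i i1 * U i1 j * Q i j))); [exact HP|].
    unfold mmul, mtr, sum3; ring.
  - rewrite <- Hd. transitivity (mmul (mmul (mtr Q) Q) (mmul U (mmul (mtr Q) Q))).
    + rewrite HQ2, mmul_id_l, mmul_id_r; reflexivity.
    + msolve.
Qed.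

Lemma PSym_diag d : (forall i, 0 < d i) -> PSym3 (diag3 d).
Proof.
  intros Hd. split.
  - intros i j; destruct i, j; reflexivity.
  - intros x [i Hi]. unfold sum3, diag3; simpl.
    pose proof (Hd i0); pose proof (Hd i1); pose proof (Hd i2).
    assert (0 <= x i0 * x i0) by nra. assert (0 <= x i1 * x i1) by nra. assert (0 <= x i2 * x i2) by nra.
    assert (0 < x i * x i) by (apply Rsqr_pos_lt; exact Hi).
    destruct i; nra.
Qed.

Lemma entry_le A B i j : Rabs (A i j - B i j) <= mdist A B.
Proof.
  unfold mdist, sum3.
  pose proof (Rabs_pos (A i0 i0 - B i0 i0)); pose proof (Rabs_pos (A i0 i1 - B i0 i1));
  pose proof (Rabs_pos (A i0 i2 - B i0 i2)); pose proof (Rabs_pos (A i1 i0 - B i1 i0));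
  pose proof (Rabs_pos (A i1 i1 - B i1 i1)); pose proof (Rabs_pos (A i1 i2 - B i1 i2));
  pose proof (Rabs_pos (A i2 i0 - B i2 i0)); pose proof (Rabs_pos (A i2 i1 - B i2 i1));
  pose proof (Rabs_pos (A i2 i2 - B i2 i2)).
  destruct i, j; lra.
Qed.

Definition dg (a b c : R) : Mat3 := diag3 (fun i => match i with i0 => a | i1 => b | i2 => c end).

Lemma dg_pos a b c : 0 < a -> 0 < b -> 0 < c -> PSym3 (dg a b c).
Proof. intros; apply PSym_diag; intro i; destruct i; assumption. Qed.

Lemma dg_mul a b c a' b' c' : mmul (dg a b c) (dg a' b' c') = dg (a*a') (b*b') (c*c').
Proof. apply mat_ext; intros i j; destruct i, j; unfold mmul, dg, diag3, sum3; simpl; ring. Qed.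

Definition S0 : Mat3 := dg (-1) 1 1.
Definition S1 : Mat3 := dg 1 (-1) 1.
Definition P01 : Mat3 := fun i j => match i, j with i0,i1 => 1 | i1,i0 => 1 | i2,i2 => 1 | _,_ => 0 end.
Definition P12 : Mat3 := fun i j => match i, j with i0,i0 => 1 | i1,i2 => 1 | i2,i1 => 1 | _,_ => 0 end.

Lemma S0_orth : Orth3 S0. Proof. unfold Orth3, S0, dg; msolve. Qed.
Lemma S1_orth : Orth3 S1. Proof. unfold Orth3, S1, dg; msolve. Qed.
Lemma P01_orth : Orth3 P01. Proof. unfold Orth3, P01; msolve. Qed.
Lemma P12_orth : Orth3 P12. Proof. unfold Orth3, P12; msolve. Qed.

Lemma S0_conj a b c : mmul (mtr S0) (mmul (dg a b c) S0) = dg a b c.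
Proof. unfold S0, dg; msolve. Qed.
Lemma S1_conj a b c : mmul (mtr S1) (mmul (dg a b c) S1) = dg a b c.
Proof. unfold S1, dg; msolve. Qed.
Lemma P01_conj a b c : mmul (mtr P01) (mmul (dg a b c) P01) = dg b a c.
Proof. unfold P01, dg; msolve. Qed.
Lemma P12_conj a b c : mmul (mtr P12) (mmul (dg a b c) P12) = dg a c b.
Proof. unfold P12, dg; msolve. Qed.

Section Diag.
Variable T : Mat3 -> Mat3.
Hypothesis Hcont : cont_on_PSym T.
Hypothesis Hiso : forall Q U, Orth3 Q -> PSym3 U ->
            T (mmul (mtr Q) (mmul U Q)) = mmul (mtr Q) (mmul (T U) Q).
Hypothesis Hadd : forall U1 U2, PSym3 U1 -> PSym3 U2 -> mmul U1 U2 = mmul U2 U1 ->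
            T (mmul U1 U2) = madd (T U1) (T U2).

Lemma Toff a b c : 0 < a -> 0 < b -> 0 < c ->
  forall i j, i <> j -> T (dg a b c) i j = 0.
Proof.
  intros Ha Hb Hc.
  pose proof (Hiso S0 (dg a b c) S0_orth (dg_pos a b c Ha Hb Hc)) as E0.
  pose proof (Hiso S1 (dg a b c) S1_orth (dg_pos a b c Ha Hb Hc)) as E1.
  rewrite S0_conj in E0. rewrite S1_conj in E1.
  set (M := T (dg a b c)) in *. clearbody M.
  intros i j Hij.
  assert (F0 := f_equal (fun X => X i j) E0). assert (F1 := f_equal (fun X => X i j) E1).
  simpl in F0, F1. unfold S0, S1, dg, mmul, mtr, diag3, sum3 in F0, F1.
  destruct i, j; simpl in *; try (exfalso; apply Hij; reflexivity); lra.
Qed.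

Lemma TP01 a b c : 0 < a -> 0 < b -> 0 < c ->
  T (dg b a c) = mmul (mtr P01) (mmul (T (dg a b c)) P01).
Proof. intros. rewrite <- P01_conj. apply Hiso; [apply P01_orth| apply dg_pos; assumption]. Qed.
Lemma TP12 a b c : 0 < a -> 0 < b -> 0 < c ->
  T (dg a c b) = mmul (mtr P12) (mmul (T (dg a b c)) P12).
Proof. intros. rewrite <- P12_conj. apply Hiso; [apply P12_orth| apply dg_pos; assumption]. Qed.

Lemma Tsplit a b c : 0 < a -> 0 < b -> 0 < c ->
  T (dg a b c) = madd (T (dg a 1 1)) (madd (T (dg 1 b 1)) (T (dg 1 1 c))).
Proof.
  intros Ha Hb Hc.
  assert (E : dg a b c = mmul (dg a 1 1) (mmul (dg 1 b 1) (dg 1 1 c))).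
  { rewrite !dg_mul. f_equal; ring. }
  rewrite E, Hadd, Hadd; try reflexivity.
  - apply dg_pos; lra.
  - apply dg_pos; lra.
  - rewrite !dg_mul; f_equal; ring.
  - apply dg_pos; lra.
  - rewrite dg_mul. apply dg_pos; lra.
  - rewrite !dg_mul; f_equal; ring.
Qed.

Definition fe (i j : I3) (t : R) : R := T (dg (exp t) 1 1) i j.

Lemma fe_add i j s t : fe i j (s + t) = fe i j s + fe i j t.
Proof.
  unfold fe. rewrite exp_plus.
  replace (dg (exp s * exp t) 1 1) with (mmul (dg (exp s) 1 1) (dg (exp t) 1 1))
    by (rewrite dg_mul; f_equal; ring).
  rewrite Hadd; [reflexivity| apply dg_pos; try apply exp_pos; lra | apply dg_pos; try apply exp_pos; lra |].
  rewrite !dg_mul; f_equal; ring.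
Qed.

Lemma fe_cont i j : forall x eps, 0 < eps -> exists d, 0 < d /\
  forall y, Rabs (y - x) < d -> Rabs (fe i j y - fe i j x) < eps.
Proof.
  intros x eps He.
  destruct (Hcont (dg (exp x) 1 1) (dg_pos _ _ _ (exp_pos x) Rlt_0_1 Rlt_0_1) eps He) as [d [Hd Hd2]].
  destruct (exp_cont x d Hd) as [d' [Hd' Hd'2]].
  exists d'. split; [exact Hd'|]. intros y Hy.
  eapply Rle_lt_trans; [apply entry_le|]. apply Hd2.
  - apply dg_pos; [apply exp_pos | lra | lra].
  - unfold mdist, sum3, dg, diag3; simpl.
    rewrite !Rminus_diag, !Rabs_R0. specialize (Hd'2 y Hy). lra.
Qed.

Lemma fe_lin i j t : fe i j t = fe i j 1 * t.
Proof. apply cauchy_lin; [apply fe_add | apply fe_cont]. Qed.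

Lemma Tdiag_formula : exists al be, forall d, (forall i, 0 < d i) ->
  T (diag3 d) = madd (mscal al (diag3 (fun i => ln (d i))))
                     (mscal (be * trace (diag3 (fun i => ln (d i)))) mid).
Proof.
  exists (fe i0 i0 1 - fe i1 i1 1), (fe i1 i1 1).
  intros d Hd.
  assert (Ed : diag3 d = dg (exp (ln (d i0))) (exp (ln (d i1))) (exp (ln (d i2)))).
  { rewrite !exp_ln by apply Hd. apply mat_ext; intros i j; destruct i, j; reflexivity. }
  rewrite Ed. set (x0 := ln (d i0)). set (x1 := ln (d i1)). set (x2 := ln (d i2)).
  assert (P0 := exp_pos x0). assert (P1 := exp_pos x1). assert (P2 := exp_pos x2).
  rewrite Tsplit by assumption.
  assert (Q1 : forall t, T (dg 1 (exp t) 1) = mmul (mtr P01) (mmul (T (dg (exp t) 1 1)) P01))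
    by (intro t; apply TP01; [apply exp_pos|lra|lra]).
  assert (Q2 : forall t, T (dg 1 1 (exp t)) = mmul (mtr P12) (mmul (T (dg 1 (exp t) 1)) P12))
    by (intro t; apply TP12; [lra|apply exp_pos|lra]).
  assert (Q3 : forall t, T (dg (exp t) 1 1) = mmul (mtr P12) (mmul (T (dg (exp t) 1 1)) P12))
    by (intro t; apply TP12; [apply exp_pos|lra|lra]).
  rewrite (Q2 x2), (Q1 x2), (Q1 x1).
  assert (Off : forall t i j, i <> j -> fe i j t = 0).
  { intros t i j Hij. apply Toff; [apply exp_pos|lra|lra|exact Hij]. }
  assert (F22 : forall t, fe i2 i2 t = fe i1 i1 t).
  { intro t. unfold fe. pose proof (f_equal (fun X => X i2 i2) (Q3 t)) as H.
    simpl in H. unfold mmul, mtr, P12, sum3 in H; simpl in H. rewrite H; ring. }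
  assert (L := fe_lin). unfold fe in Off, F22, L.
  apply mat_ext; intros i j.
  unfold fe, madd, mscal, mmul, mtr, P01, P12, sum3, mid, diag3, trace.
  destruct i, j; simpl; fold x0 x1 x2;
  rewrite ?(Off x0 i0 i1), ?(Off x0 i0 i2), ?(Off x0 i1 i0), ?(Off x0 i1 i2), ?(Off x0 i2 i0), ?(Off x0 i2 i1),
    ?(Off x1 i0 i1), ?(Off x1 i0 i2), ?(Off x1 i1 i0), ?(Off x1 i1 i2), ?(Off x1 i2 i0), ?(Off x1 i2 i1),
    ?(Off x2 i0 i1), ?(Off x2 i0 i2), ?(Off x2 i1 i0), ?(Off x2 i1 i2), ?(Off x2 i2 i0), ?(Off x2 i2 i1),
    ?F22, ?(L i0 i0 x0), ?(L i0 i0 x1), ?(L i0 i0 x2), ?(L i1 i1 x0), ?(L i1 i1 x1), ?(L i1 i1 x2)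
    by discriminate; ring.
Qed.
End Diag.

Lemma trace_conj Q M : mmul Q (mtr Q) = mid -> trace (mmul (mtr Q) (mmul M Q)) = trace M.
Proof.
  intros H. transitivity (trace (mmul M (mmul Q (mtr Q)))).
  - unfold trace, mmul, mtr, sum3; ring.
  - rewrite H, mmul_id_r. reflexivity.
Qed.

Lemma conj_lin Q M a c : mmul (mtr Q) (mmul (madd (mscal a M) (mscal c mid)) Q) =
  madd (mscal a (mmul (mtr Q) (mmul M Q))) (mscal c (mmul (mtr Q) Q)).
Proof. msolve. Qed.

Lemma logm_spec U : PSym3 U -> is_logm U (logm U).
Proof.
  intros HU. unfold logm. apply epsilon_spec.
  destruct (spec_PSym U HU) as [Q [d [HQ [Hd E]]]].
  exists (mmul (mtr Q) (mmul (diag3 (fun i => ln (d i))) Q)), Q, d. auto.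
Qed.

Theorem mainTheorem9 (T : Mat3 -> Mat3)
  (HSym : forall U, PSym3 U -> Sym3 (T U))
  (Hcont : cont_on_PSym T)
  (Hiso : forall Q U, Orth3 Q -> PSym3 U ->
            T (mmul (mtr Q) (mmul U Q)) = mmul (mtr Q) (mmul (T U) Q))
  (Hzero : forall U, PSym3 U -> (T U = mzero <-> U = mid))
  (Hadd : forall U1 U2, PSym3 U1 -> PSym3 U2 -> mmul U1 U2 = mmul U2 U1 ->
            T (mmul U1 U2) = madd (T U1) (T U2)) :
  (exists G Lam : R, G <> 0 /\ 3 * Lam + 2 * G <> 0 /\
     forall U, PSym3 U ->
       T U = madd (mscal (2 * G) (logm U)) (mscal (Lam * trace (logm U)) mid))
  /\
  (exists G K : R, G <> 0 /\ K <> 0 /\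
     forall U, PSym3 U ->
       T U = madd (mscal (2 * G) (dev3 (logm U))) (mscal (K * trace (logm U)) mid)).
Proof.
  destruct (Tdiag_formula T Hcont Hiso Hadd) as [al [be Hf]].
  assert (Key : forall U, PSym3 U -> T U = madd (mscal al (logm U)) (mscal (be * trace (logm U)) mid)).
  { intros U HU. pose proof (logm_spec U HU) as HL. revert HL. generalize (logm U) as L.
    intros L [Q [d [HQ [Hd [EU EL]]]]]. subst U L.
    assert (HQ' : mmul Q (mtr Q) = mid) by (apply inv_comm; exact HQ).
    rewrite Hiso by (try exact HQ; apply PSym_diag; exact Hd).
    rewrite Hf by exact Hd. rewrite conj_lin, trace_conj by exact HQ'.
    unfold Orth3 in HQ. rewrite HQ. reflexivity. }
  assert (E1 : 1 < exp 1) by (pose proof (exp_ineq1 1 ltac:(lra)); lra).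
  assert (Hal : al <> 0).
  { intro H0.
    assert (HP : PSym3 (dg (exp 1) (exp (-1)) 1)) by (apply dg_pos; [apply exp_pos|apply exp_pos|lra]).
    assert (Z : T (dg (exp 1) (exp (-1)) 1) = mzero).
    { unfold dg. rewrite Hf by (intro i; destruct i; [apply exp_pos|apply exp_pos|lra]).
      rewrite H0. apply mat_ext; intros i j; destruct i, j;
      unfold madd, mscal, diag3, trace, mid, mzero; simpl; rewrite ?ln_exp, ?ln_1; ring. }
    apply (Hzero _ HP) in Z. pose proof (f_equal (fun X => X i0 i0) Z) as Z0.
    unfold dg, diag3, mid in Z0; simpl in Z0. lra. }
  assert (Hk : 3 * be + al <> 0).
  { intro H0.
    assert (HP : PSym3 (dg (exp 1) (exp 1) (exp 1))) by (apply dg_pos; apply exp_pos).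
    assert (Z : T (dg (exp 1) (exp 1) (exp 1)) = mzero).
    { unfold dg. rewrite Hf by (intro i; destruct i; apply exp_pos).
      apply mat_ext; intros i j; destruct i, j;
      unfold madd, mscal, diag3, trace, mid, mzero; simpl; rewrite ?ln_exp; lra. }
    apply (Hzero _ HP) in Z. pose proof (f_equal (fun X => X i0 i0) Z) as Z0.
    unfold dg, diag3, mid in Z0; simpl in Z0. lra. }
  split.
  - exists (al / 2), be. split; [lra|]. split; [lra|].
    intros U HU. rewrite Key by exact HU. replace (2 * (al / 2)) with al by field. reflexivity.
  - exists (al / 2), (be + al / 3). split; [lra|]. split; [lra|].
    intros U HU. rewrite Key by exact HU.
    apply mat_ext; intros i j; destruct i, j;
    unfold dev3, madd, mscal, mid; simpl; field.
Qed.
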